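(* Let $S(p)$ be a projectively non-degenerate oriented polyhedral $2$-surface in $\mathbb{R}^3$ with vertices $p_i$, and let $\omega_{ij}$ be the projective lifting coefficients associated to $S$. Then for every vertex $p_i$ of $S$, \[ \sum_{j:\ p_ip_j\text{ an edge of } S}\omega_{ij}\,dp_i\wedge dp_j=0\quad\text{in }\Lambda^2(\mathbb{R}^3), \] i.e. the projective stress $\Psi_{ij}=\omega_{ij}\,dp_i\wedge dp_j$ on the projective framework in $\mathbb{R}P^2$ with vertices $\hat p_i=[p_i]$ and the edges of $S$ is a self-stress.
   Context: $O$ is the origin of $\mathbb{R}^3$; for $p=(a_1,a_2,a_3)\in\mathbb{R}^3$, $dp=a_1dx_1+a_2dx_2+a_3dx_3$, and $\Lambda^2(\mathbb{R}^3)$ is the space of exterior $2$-forms. $\det(u,v,w)$ is the determinant of the matrix with columns $u,v,w$. For $p_1,\dots,p_4$ with affine spans ${\rm span}(p_1,p_2,p_3)$, ${\rm span}(p_1,p_2,p_4)$ two-dimensional and not containing $O$, set $\omega(p_1,p_2;p_3,p_4)=\det(p_2-p_1,p_3-p_1,p_4-p_1)/(\det(p_1,p_2,p_3)\det(p_1,p_2,p_4))$ (it depends only on $p_1,p_2$ and the two planes). $S(p)$ is projectively non-degenerate if the planes of its faces avoid $O$. For an edge oriented as $\overrightarrow{p_ip_j}$, the orientation of $S$ determines a left and a right adjacent face; with $p_k$ a point of the right face and $p_l$ a point of the left face, both off the edge line, $\omega_{ij}=\omega(p_i,p_j;p_k,p_l)$ (independent of choices and symmetric in $i,j$). *)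

(* Defs.v *)
From mathcomp Require Import all_boot all_order all_algebra.
Set Implicit Arguments. Unset Strict Implicit. Unset Printing Implicit Defensive.
Import Order.TTheory GRing.Theory Num.Theory.
Local Open Scope ring_scope.

Definition det3 {R : comRingType} (u v w : 'cV[R]_3) : R :=
  \det (\matrix_(i < 3, j < 3)
          (if j == 0 :> nat then u i 0 else if j == 1 :> nat then v i 0 else w i 0)).

Definition omega_pts {R : fieldType} (p1 p2 p3 p4 : 'cV[R]_3) : R :=
  det3 (p2 - p1) (p3 - p1) (p4 - p1) / (det3 p1 p2 p3 * det3 p1 p2 p4).

(* Exterior 2-forms on R^3 are represented by their (antisymmetric) coefficient
   matrices c, standing for sum_{k<l} c k l dx_k /\ dx_l.
   For p = (a_k), q = (b_k):  dp /\ dq = sum_{k,l} a_k b_l dx_k /\ dx_l,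
   whose coefficient on dx_k /\ dx_l is a_k b_l - a_l b_k. *)
Definition wedge {R : comRingType} (a b : 'cV[R]_3) : 'M[R]_3 :=
  \matrix_(k < 3, l < 3) (a k 0 * b l 0 - a l 0 * b k 0).

Definition on_line {R : ringType} (a b x : 'cV[R]_3) : Prop :=
  exists t : R, x = a + t *: (b - a).

Definition aff_indep {R : ringType} (a b c : 'cV[R]_3) : Prop :=
  forall s t : R, s *: (b - a) + t *: (c - a) = 0 -> s = 0 /\ t = 0.

Definition in_aff_span {R : ringType} (a b c x : 'cV[R]_3) : Prop :=
  exists s t : R, x = a + s *: (b - a) + t *: (c - a).

(* Vertices are indexed by 'I_n; a face is a cyclic sequence of
   vertex indices, its cyclic order giving the orientation.  The directed edge
   i -> j occurs in face F when j is the cyclic successor of i in F; F is then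
   the LEFT face of the oriented edge i -> j, and the face containing j -> i is
   its RIGHT face. *)
Definition dir_edge n (F : seq 'I_n) (i j : 'I_n) : bool :=
  (i \in F) && (next F i == j).

Definition is_edge n (faces : seq (seq 'I_n)) (i j : 'I_n) : bool :=
  has (fun F => dir_edge F i j || dir_edge F j i) faces.

(* link of vertex i: arc from the successor to the predecessor of i in each face *)
Definition link_rel n (faces : seq (seq 'I_n)) (i : 'I_n) : rel 'I_n :=
  fun a b => has (fun F => [&& i \in F, next F i == a & prev F i == b]) faces.

Definition oriented_polyhedral_surface {R : realFieldType} n
    (p : 'I_n -> 'cV[R]_3) (faces : seq (seq 'I_n)) : Prop :=
  [/\ injective p,
      (forall F, F \in faces -> uniq F /\ (3 <= size F)%N),
      (forall F, F \in faces -> exists a b c, [/\ a \in F, b \in F, c \in F,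
          aff_indep (p a) (p b) (p c) &
          forall v, v \in F -> in_aff_span (p a) (p b) (p c) (p v)]),
      (* oriented, without boundary: each directed edge lies in exactly one
         face, and its reverse in exactly one face *)
      (forall i j, has (fun F => dir_edge F i j) faces ->
          count (fun F => dir_edge F i j) faces = 1%N /\
          count (fun F => dir_edge F j i) faces = 1%N) &
      (* the faces around each vertex form a single disk (link is connected) *)
      (forall i a b, is_edge faces i a -> is_edge faces i b ->
          connect (link_rel faces i) a b)].

Definition proj_nondegenerate {R : realFieldType} n
    (p : 'I_n -> 'cV[R]_3) (faces : seq (seq 'I_n)) : Prop :=
  forall F, F \in faces -> forall a b c, a \in F -> b \in F -> c \in F ->
    aff_indep (p a) (p b) (p c) -> ~ in_aff_span (p a) (p b) (p c) 0.

Definition lifting_coeffs {R : realFieldType} n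
    (p : 'I_n -> 'cV[R]_3) (faces : seq (seq 'I_n)) (omega : 'I_n -> 'I_n -> R) : Prop :=
  forall i j, is_edge faces i j ->
    exists k l : 'I_n,
      [/\ has (fun F => dir_edge F j i && (k \in F)) faces,
          has (fun F => dir_edge F i j && (l \in F)) faces,
          ~ on_line (p i) (p j) (p k),
          ~ on_line (p i) (p j) (p l) &
          omega i j = omega_pts (p i) (p j) (p k) (p l)].

(* Main.v *)
Require Import Defs.
From mathcomp Require Import all_boot all_order all_algebra ring.
Import GRing.Theory Num.Theory.
Local Open Scope ring_scope.
Definition i0 : 'I_3 := @Ordinal 3 0 isT.
Definition i1 : 'I_3 := @Ordinal 3 1 isT.
Definition i2 : 'I_3 := @Ordinal 3 2 isT.
Definition cmp {R : nzRingType} (x : 'cV[R]_3) (k : nat) : R := x (inord k) 0.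
Lemma cmpE {R : nzRingType} (x : 'cV[R]_3) (k : 'I_3) (z : 'I_1) : x k z = cmp x (val k).
Proof. by rewrite /cmp inord_val (ord1 z). Qed.
Lemma cmpB {R : nzRingType} (x y : 'cV[R]_3) k : cmp (x - y) k = cmp x k - cmp y k.
Proof. by rewrite /cmp !mxE. Qed.
Lemma cmpD {R : nzRingType} (x y : 'cV[R]_3) k : cmp (x + y) k = cmp x k + cmp y k.
Proof. by rewrite /cmp mxE. Qed.
Lemma cmpZ {R : nzRingType} (x : 'cV[R]_3) a k : cmp (a *: x) k = a * cmp x k.
Proof. by rewrite /cmp mxE. Qed.
Lemma cmp0 {R : nzRingType} k : cmp (0 : 'cV[R]_3) k = 0.
Proof. by rewrite /cmp mxE. Qed.

Lemma det22 (R : comNzRingType) (M : 'M[R]_2) : \det M = M 0 0 * M 1 1 - M 1 0 * M 0 1.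
Proof.
rewrite (expand_det_col _ ord0) !big_ord_recl big_ord0 /cofactor !det_mx11 !mxE /=.
rewrite [lift (lift _ _) _](_ : _ = (0:'I_2)); last exact/val_inj.
rewrite [lift _ _](_ : _ = (1:'I_2)); last exact/val_inj.

rewrite /bump /= expr0 expr1; ring.
Qed.

Lemma det3E (R : comNzRingType) (u v w : 'cV[R]_3) : det3 u v w =
  cmp u 0 * (cmp v 1 * cmp w 2 - cmp v 2 * cmp w 1) - cmp v 0 * (cmp u 1 * cmp w 2 - cmp u 2 * cmp w 1)
  + cmp w 0 * (cmp u 1 * cmp v 2 - cmp u 2 * cmp v 1).
Proof.
rewrite /det3 (expand_det_row _ i0) !big_ord_recl big_ord0 /cofactor !det22 !mxE /=.
rewrite !(cmpE u) !(cmpE v) !(cmpE w) /= /bump /=.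
have -> : (1 %% 2 = 1)%N by [].
rewrite /=. ring.
Qed.

Section Alg.
Variable R : fieldType.
Implicit Types a b c d r s x : 'cV[R]_3.

Definition dotv r x := cmp r 0 * cmp x 0 + cmp r 1 * cmp x 1 + cmp r 2 * cmp x 2.
Definition crs a b (m : nat) : R :=
  match m with
  | 0 => cmp a 1 * cmp b 2 - cmp a 2 * cmp b 1
  | 1 => cmp a 2 * cmp b 0 - cmp a 0 * cmp b 2
  | _ => cmp a 0 * cmp b 1 - cmp a 1 * cmp b 0
  end.
Definition X3 a b c (m : nat) : R := crs b c m + crs c a m + crs a b m.

Lemma cov_eq r a b c m : dotv r a = 1 -> dotv r b = 1 -> dotv r c = 1 ->
  det3 a b c * cmp r m = X3 a b c m \/ (2 < m)%N.
Proof.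
move=> ha hb hc.
case: m => [|[|[|m]]]; [left|left|left|by right].
- have -> : det3 a b c * cmp r 0 = dotv r a * crs b c 0 + dotv r b * crs c a 0 + dotv r c * crs a b 0.
    by rewrite det3E /dotv /crs; ring.
  by rewrite ha hb hc !mul1r.
- have -> : det3 a b c * cmp r 1 = dotv r a * crs b c 1 + dotv r b * crs c a 1 + dotv r c * crs a b 1.
    by rewrite det3E /dotv /crs; ring.
  by rewrite ha hb hc !mul1r.
- have -> : det3 a b c * cmp r 2 = dotv r a * crs b c 2 + dotv r b * crs c a 2 + dotv r c * crs a b 2.
    by rewrite det3E /dotv /crs; ring.
  by rewrite ha hb hc !mul1r.
Qed.

Lemma cov_eq' r a b c m : dotv r a = 1 -> dotv r b = 1 -> dotv r c = 1 ->
  det3 a b c != 0 -> (m < 3)%N -> cmp r m = X3 a b c m / det3 a b c.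
Proof.
move=> ha hb hc hD hm; have [] := @cov_eq r a b c m ha hb hc.
  by move=> <-; field.
by rewrite ltnNge -ltnS hm.
Qed.

Lemma edge_id a b c d r s m : dotv r a = 1 -> dotv r b = 1 -> dotv r c = 1 ->
  dotv s a = 1 -> dotv s b = 1 -> dotv s d = 1 ->
  det3 a b c != 0 -> det3 a b d != 0 -> (m < 3)%N ->
  cmp r m = omega_pts a b c d * crs a b m + cmp s m.
Proof.
move=> ra rb rc sa sb sd D1 D2 hm.
rewrite (@cov_eq' r a b c m ra rb rc D1 hm) (@cov_eq' s a b d m sa sb sd D2 hm) /omega_pts.
move: D1 D2; rewrite !det3E !cmpB => D1 D2.
case: m hm => [|[|[|m]]] // _; rewrite /X3 /crs; field; exact/andP.
Qed.

End Alg.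
Arguments dotv {R}. Arguments crs {R}. Arguments X3 {R}.

Definition Hm {R : nzRingType} (v : 'cV[R]_3) : 'M[R]_3 := \matrix_(k < 3, l < 3)
  let kl := (val k, val l) in
  if kl == (1, 2)%N then cmp v 0 else if kl == (2, 1)%N then - cmp v 0
  else if kl == (2, 0)%N then cmp v 1 else if kl == (0, 2)%N then - cmp v 1
  else if kl == (0, 1)%N then cmp v 2 else if kl == (1, 0)%N then - cmp v 2 else 0.

Lemma edge_mx (R : fieldType) (a b c d r s : 'cV[R]_3) : dotv r a = 1 -> dotv r b = 1 -> dotv r c = 1 ->
  dotv s a = 1 -> dotv s b = 1 -> dotv s d = 1 ->
  det3 a b c != 0 -> det3 a b d != 0 ->
  omega_pts a b c d *: wedge a b = Hm r - Hm s.
Proof.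
move=> ra rb rc sa sb sd D1 D2.
have e0 := @edge_id R a b c d r s 0 ra rb rc sa sb sd D1 D2 isT.
have e1 := @edge_id R a b c d r s 1 ra rb rc sa sb sd D1 D2 isT.
have e2 := @edge_id R a b c d r s 2 ra rb rc sa sb sd D1 D2 isT.
rewrite /crs in e0 e1 e2.
apply/matrixP => k l; rewrite !mxE !(cmpE a) !(cmpE b).
case: k => [[|[|[|k]]] Hk] //; case: l => [[|[|[|l]]] Hl] //=;
  rewrite ?e0 ?e1 ?e2; ring.
Qed.

Section Geo.
Variable R : fieldType.
Implicit Types a b c d r s x : 'cV[R]_3.

Definition cov a b c : 'cV[R]_3 := (det3 a b c)^-1 *: \col_(k < 3) X3 a b c k.

Lemma cmp_cov a b c m : (m < 3)%N -> cmp (cov a b c) m = (det3 a b c)^-1 * X3 a b c m.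
Proof. by move=> hm; rewrite /cmp !mxE inordK. Qed.

Lemma cov_span a b c x : det3 a b c != 0 -> in_aff_span a b c x -> dotv (cov a b c) x = 1.
Proof.
move=> D [s [t ->]]; rewrite /dotv !cmp_cov // !cmpD !cmpZ !cmpB /X3 /crs.
move: D; rewrite det3E => D; field; exact: D.
Qed.

Lemma dot_unique r a b c x : dotv r a = 1 -> dotv r b = 1 -> dotv r c = 1 ->
  det3 a b c != 0 -> dotv r x = dotv (cov a b c) x.
Proof.
move=> ha hb hc D; rewrite /dotv !cmp_cov //.
rewrite (@cov_eq' R r a b c 0 ha hb hc D isT) (@cov_eq' R r a b c 1 ha hb hc D isT)
  (@cov_eq' R r a b c 2 ha hb hc D isT).
field; exact: D.
Qed.

Lemma aff_indep_of a b c : ~ on_line a b c -> a != b -> aff_indep a b c.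
Proof.
move=> nl nab s t H.
have Hc (k : nat) : s * (cmp b k - cmp a k) + t * (cmp c k - cmp a k) = 0.
  by have := congr1 (fun M => cmp M k) H; rewrite cmpD !cmpZ !cmpB cmp0.
have [t0|tn0] := eqVneq t 0.
  split=> //; apply/eqP; apply: contraNT nab => sn0; apply/eqP/matrixP => x y.
  rewrite (cmpE a) (cmpE b); have := Hc x; rewrite t0 mul0r addr0 => /eqP.
  by rewrite mulf_eq0 (negbTE sn0) /= subr_eq0 => /eqP ->.
exfalso; apply: nl; exists (- s / t); apply/matrixP => x y.
rewrite !mxE !(cmpE a) !(cmpE b) !(cmpE c).
have E' : t * (cmp c x - cmp a x) = - (s * (cmp b x - cmp a x)).
  by apply/eqP; rewrite -subr_eq0 opprK addrC Hc.
transitivity (cmp a x + (t * (cmp c x - cmp a x)) / t); first by field.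
rewrite E'; field; exact: tn0.
Qed.

Lemma det_nz a b c : aff_indep a b c -> ~ in_aff_span a b c 0 -> det3 a b c != 0.
Proof.
move=> ai nsp; apply/negP => /eqP D.
move: D; rewrite /det3 -det_tr => /eqP /det0P [v vn0 vM].
pose f (k : nat) := v 0 (inord k).
have fE (j : 'I_3) (z : 'I_1) : v z j = f (val j) by rewrite /f inord_val (ord1 z).
have Hk (x : nat) : f 0 * cmp a x + f 1 * cmp b x + f 2 * cmp c x = 0.
  have := congr1 (fun W : 'rV[R]_3 => W 0 (inord x)) vM; rewrite !mxE !big_ord_recl big_ord0 /=.
  rewrite !mxE /= !fE /= /bump /= => E; rewrite -[RHS]E /cmp; ring.
have [sn0|s0] := eqVneq (f 0 + f 1 + f 2) 0; last first.
  apply: nsp; exists (f 1 / (f 0 + f 1 + f 2)), (f 2 / (f 0 + f 1 + f 2)).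
  apply/matrixP => x y; rewrite !mxE !(cmpE a) !(cmpE b) !(cmpE c).
  transitivity ((f 0 * cmp a x + f 1 * cmp b x + f 2 * cmp c x) / (f 0 + f 1 + f 2)).
    by rewrite Hk mul0r.
  field; exact: s0.
have [h1 h2] : f 1 = 0 /\ f 2 = 0.
  apply: ai; apply/matrixP => x y; rewrite !mxE !(cmpE a) !(cmpE b) !(cmpE c).
  have h0 : f 0 = - f 1 - f 2.
    by transitivity (f 0 + f 1 + f 2 - f 1 - f 2); [ring | rewrite sn0; ring].
  transitivity (f 0 * cmp a x + f 1 * cmp b x + f 2 * cmp c x); last exact: Hk.
  rewrite h0; ring.
have h0 : f 0 = 0.
  by transitivity (f 0 + f 1 + f 2 - f 1 - f 2); [ring | rewrite sn0 h1 h2; ring].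
move/eqP: vn0; apply; apply/matrixP => x y; rewrite fE mxE.
by case: y => [[|[|[|y]]] Hy] //=.
Qed.

End Geo.
Arguments cov {R}. Arguments cmp_cov {R}. Arguments cov_span {R}. Arguments dot_unique {R}. Arguments aff_indep_of {R}. Arguments det_nz {R}.

Lemma sum_count1 (T : eqType) (V : nmodType) (s : seq T) (P : pred T) (g : T -> V) x :
  count P s = 1%N -> x \in s -> P x -> \sum_(y <- s | P y) g y = g x.
Proof.
elim: s => [|y s IH] //= hc; rewrite inE big_cons.
case: (boolP (P y)) hc => Py /= hc.
  have c0 : count P s = 0%N by move: hc; rewrite add1n => -[].
  rewrite big_hasC; last by rewrite has_count c0.
  move=> /orP [/eqP -> //|xs Px]; first by rewrite addr0.
  by move: c0 => /eqP; rewrite -leqn0 leqNgt -has_count; case/negP; apply/hasP; exists x.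
move=> /orP [/eqP -> Px|xs Px]; first by rewrite Px in Py.
by rewrite add0n in hc; apply: IH.
Qed.

Lemma next_neq (T : eqType) (F : seq T) x : uniq F -> (2 < size F)%N -> x \in F -> next F x != x.
Proof.
move=> uF sF xF; have [k F' eF] := rot_to xF.
rewrite -(next_rot k uF) eF.
have uF' : uniq (x :: F') by rewrite -eF rot_uniq.
case: F' eF uF' => [|y F'] eF uF'.
  by move: sF; rewrite -(size_rot k) eF.
rewrite next_nth inE eqxx /= eqxx /=.
by apply/eqP => eyx; move: uF'; rewrite eyx /= inE eqxx.
Qed.

Theorem theorem3p5 (R : realFieldType) (n : nat) (p : 'I_n -> 'cV[R]_3)
    (faces : seq (seq 'I_n)) (omega : 'I_n -> 'I_n -> R) :
  oriented_polyhedral_surface p faces ->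
  proj_nondegenerate p faces ->
  lifting_coeffs p faces omega ->
  forall i : 'I_n,
    \sum_(j < n | is_edge faces i j) omega i j *: wedge (p i) (p j) = 0.
Proof.
move=> [pinj Hface Hplanar Hcount _] Hnd Hlift i.
pose N (F : seq 'I_n) : 'cV[R]_3 :=
  if [pick t : 'I_n * 'I_n * 'I_n | [&& t.1.1 \in F, t.1.2 \in F, t.2 \in F &
        det3 (p t.1.1) (p t.1.2) (p t.2) != 0]] is Some t
  then cov (p t.1.1) (p t.1.2) (p t.2) else 0.
have Ndot F v : F \in faces -> v \in F -> dotv (N F) (p v) = 1.
  move=> HF Hv; have [a0 [b0 [c0 [ha hb hc ai hspan]]]] := Hplanar F HF.
  have D0 : det3 (p a0) (p b0) (p c0) != 0.
    exact: det_nz ai (Hnd F HF a0 b0 c0 ha hb hc ai).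
  have E x : x \in F -> dotv (cov (p a0) (p b0) (p c0)) (p x) = 1.
    by move=> hx; apply: cov_span D0 (hspan x hx).
  rewrite /N; case: pickP => [[[a b] c] /= /and4P [ha' hb' hc' D]|]; last first.
    by move/(_ (a0, b0, c0)); rewrite /= ha hb hc D0.
  by rewrite -(@dot_unique R _ _ _ _ (p v) (E a ha') (E b hb') (E c hc') D); apply: E.
have Hedge j : is_edge faces i j -> omega i j *: wedge (p i) (p j) =
    \sum_(F <- faces | dir_edge F j i) Hm (N F) - \sum_(F <- faces | dir_edge F i j) Hm (N F).
  move=> He; have [k [l [hR hL nk nl Eom]]] := Hlift i j He.
  case/hasP: hR => FR FRin /andP [dR kR].
  case/hasP: hL => FL FLin /andP [dL lL].
  have hasL : has (fun F => dir_edge F i j) faces by apply/hasP; exists FL.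
  have [c1 c2] := Hcount i j hasL.
  rewrite (@sum_count1 _ _ _ _ _ _ c2 FRin dR) (@sum_count1 _ _ _ _ _ _ c1 FLin dL).
  move: dR dL => /andP [jR /eqP iR] /andP [iL /eqP jL].
  have iR' : i \in FR by rewrite -iR mem_next.
  have jL' : j \in FL by rewrite -jL mem_next.
  have [uL sL] := Hface FL FLin.
  have nij : p i != p j.
    apply/eqP => /pinj eij; move: (@next_neq _ _ _ uL sL iL); rewrite jL eij eqxx //.
  have aiR := aff_indep_of _ _ _ nk nij.
  have aiL := aff_indep_of _ _ _ nl nij.
  have D1 := det_nz _ _ _ aiR (Hnd FR FRin i j k iR' jR kR aiR).
  have D2 := det_nz _ _ _ aiL (Hnd FL FLin i j l iL jL' lL aiL).
  rewrite Eom; exact: (@edge_mx R _ _ _ _ _ _ (Ndot _ _ FRin iR') (Ndot _ _ FRin jR)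
    (Ndot _ _ FRin kR) (Ndot _ _ FLin iL) (Ndot _ _ FLin jL') (Ndot _ _ FLin lL) D1 D2).
rewrite (eq_bigr _ Hedge) big_mkcond /=.
have Hz j : ~~ is_edge faces i j -> (\sum_(F <- faces | dir_edge F j i) Hm (N F)
    - \sum_(F <- faces | dir_edge F i j) Hm (N F)) = 0.
  move=> ne; rewrite !big_hasC ?subrr //; apply: contra ne => h; rewrite /is_edge;
    by apply: sub_has h => F /= ->; rewrite ?orbT.
transitivity (\sum_(j < n) (\sum_(F <- faces | dir_edge F j i) Hm (N F)
    - \sum_(F <- faces | dir_edge F i j) Hm (N F))).
  by apply: eq_bigr => j _; case: ifP => // /negbT /Hz ->.
rewrite sumrB; apply/eqP; rewrite subr_eq0; apply/eqP.
rewrite (exchange_big_dep xpredT) //= [RHS](exchange_big_dep xpredT) //=.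
apply: eq_big_seq => F HF; have [uF _] := Hface F HF.
have [iF|iF] := boolP (i \in F).
  rewrite (big_pred1 (prev F i)) ?(big_pred1 (next F i)) // => j /=; rewrite /dir_edge.
    by rewrite iF eq_sym.
  apply/andP/eqP => [[hj /eqP <-]|->]; first by rewrite prev_next.
  by rewrite mem_prev iF next_prev.
rewrite !big_pred0 // => j /=; rewrite /dir_edge.
  by rewrite (negbTE iF).
by apply/negP => /andP [hj /eqP e]; move: iF; rewrite -e mem_next hj.
Qed.
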